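(* Let $m>0$ and $a_1,a_2\in(-\infty,4m^2)$. Define on $I=(-\infty,4m^2)$ the function $A(\gamma):=(a_1-\gamma)(a_2-\gamma)J(\gamma)$. Then $A$ is convex on $I$ (indeed $A''(\gamma)=\int_{4m^2}^\infty\rho(M)\frac{2(M-a_1)(M-a_2)}{(M-\gamma)^3}dM>0$), $A'$ is monotonically increasing, $\lim_{\gamma\to-\infty}A'(\gamma)=-\infty$, $\lim_{\gamma\to4m^2}A'(\gamma)=+\infty$, and hence $A'(I)=\mathbb{R}$.
   Context: $\rho(M)=\frac{1}{16\pi^2}\sqrt{1-\frac{4m^2}{M}}\frac1M$ for $M\ge4m^2$, and $J(\gamma)=\int_{4m^2}^\infty\frac{\rho(M)}{M-\gamma}dM$ for $\gamma<4m^2$. *)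

(* Defs.v *)
From Stdlib Require Import Reals.
From Coquelicot Require Import Coquelicot.
Open Scope R_scope.

Definition rho (m M : R) : R :=
  / (16 * PI ^ 2) * sqrt (1 - 4 * m ^ 2 / M) * / M.

Definition J (m g : R) : R :=
  RInt_gen (fun M => rho m M / (M - g)) (at_point (4 * m ^ 2)) (Rbar_locally p_infty).

Definition Afun (m a1 a2 g : R) : R := (a1 - g) * (a2 - g) * J m g.

(* Main.v *)
Require Import Defs.
From Stdlib Require Import Reals Lra Psatz.
From Coquelicot Require Import Coquelicot.
Open Scope R_scope.

Lemma aux_xyx : forall x y : R, x + y - x = y. Proof. intros; ring. Qed.

Lemma rint_left_bound (G : R -> R) :
  (forall v, 0 <= v <= 1 -> continuous G v) ->
  exists B, forall s, 0 <= s <= 1 -> Rabs (RInt G 0 1 - RInt G 0 s) <= (1 - s) * B.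
Proof.
  intros HG.
  destruct (continuity_ab_maj (fun v => Rabs (G v)) 0 1) as [Mx [HM _]].
  { lra. }
  { intros c Hc. apply continuity_pt_filterlim.
    apply (continuous_comp G Rabs). apply HG; auto. apply continuous_Rabs. }
  exists (Rabs (G Mx)). intros s Hs.
  assert (E1 : ex_RInt G 0 s).
  { apply (ex_RInt_continuous (V := R_CompleteNormedModule)). intros z Hz. apply HG.
    rewrite Rmin_left in Hz by lra. rewrite Rmax_right in Hz by lra. lra. }
  assert (E2 : ex_RInt G s 1).
  { apply (ex_RInt_continuous (V := R_CompleteNormedModule)). intros z Hz. apply HG.
    rewrite Rmin_left in Hz by lra. rewrite Rmax_right in Hz by lra. lra. }
  pose proof (RInt_Chasles G 0 s 1 E1 E2) as HC.
  change (RInt G 0 s + RInt G s 1 = RInt G 0 1) in HC. rewrite <- HC.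
  rewrite aux_xyx.
  apply abs_RInt_le_const; try lra; auto.
  intros t Ht. apply HM. lra.
Qed.

Definition phi (mu v : R) := mu / (1 - v^2).
Definition dphi (mu v : R) := 2 * mu * v / (1 - v^2)^2.
Definition psi (mu y : R) := sqrt (1 - mu / y).

Lemma psi_props mu y : 0 < mu -> mu < y ->
  0 <= psi mu y < 1 /\ psi mu y ^ 2 = 1 - mu / y /\ 1 - psi mu y <= mu / y.
Proof.
  intros Hmu Hy. unfold psi.
  assert (H0 : 0 < mu / y < 1).
  { split. apply Rdiv_lt_0_compat; lra. apply Rmult_lt_reg_r with y. lra.
    unfold Rdiv. rewrite Rmult_assoc, Rinv_l by lra. lra. }
  assert (Hs2 : sqrt (1 - mu / y) ^ 2 = 1 - mu / y).
  { simpl. rewrite Rmult_1_r. apply sqrt_sqrt. lra. }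
  assert (Hs0 : 0 <= sqrt (1 - mu / y)) by apply sqrt_pos.
  assert (Hs1 : sqrt (1 - mu / y) < 1).
  { apply Rlt_le_trans with (sqrt 1); [apply sqrt_lt_1; lra | rewrite sqrt_1; lra]. }
  split; [lra|]. split; [exact Hs2|]. nra.
Qed.

Lemma cov (mu : R) (f G : R -> R) : 0 < mu ->
  (forall M, mu <= M -> continuous f M) ->
  (forall v, 0 <= v < 1 -> G v = dphi mu v * f (phi mu v)) ->
  (forall v, 0 <= v <= 1 -> continuous G v) ->
  is_RInt_gen f (at_point mu) (Rbar_locally p_infty) (RInt G 0 1).
Proof.
  intros Hmu Hf HG HGc.
  assert (Step1 : forall y, mu < y -> is_RInt f mu y (RInt G 0 (psi mu y))).
  { intros y Hy. destruct (psi_props mu y Hmu Hy) as [Hp [Hp2 _]].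
    assert (Hc : is_RInt (fun v => scal (dphi mu v) (f (phi mu v))) 0 (psi mu y)
                   (RInt f (phi mu 0) (phi mu (psi mu y)))).
    { apply (is_RInt_comp (V := R_CompleteNormedModule)).
      - intros x Hx. rewrite Rmin_left in Hx by lra. rewrite Rmax_right in Hx by lra.
        apply Hf. assert (h: 0 < 1 - x^2 <= 1) by nra.
        unfold phi, Rdiv. rewrite <- (Rmult_1_r mu) at 1.
        apply Rmult_le_compat_l; [lra|]. rewrite <- Rinv_1.
        apply Rinv_le_contravar; lra.
      - intros x Hx. rewrite Rmin_left in Hx by lra. rewrite Rmax_right in Hx by lra.
        assert (1 - x^2 <> 0) by nra.
        split.
        + unfold phi, dphi. auto_derive. auto. field. auto.
        + apply (ex_derive_continuous (K := R_AbsRing) (V := R_NormedModule)). unfold dphi. auto_derive. auto. }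
    assert (E0 : phi mu 0 = mu) by (unfold phi; field).
    assert (E1 : phi mu (psi mu y) = y) by (unfold phi; rewrite Hp2; field; lra).
    rewrite E0, E1 in Hc.
    assert (Hc' : is_RInt G 0 (psi mu y) (RInt f mu y)).
    { apply is_RInt_ext with (2 := Hc). intros x Hx.
      rewrite Rmin_left in Hx by lra. rewrite Rmax_right in Hx by lra.
      rewrite HG by lra. reflexivity. }
    rewrite (is_RInt_unique _ _ _ _ Hc').
    apply (RInt_correct (V := R_CompleteNormedModule)).
    apply (ex_RInt_continuous (V := R_CompleteNormedModule)).
    intros z Hz. rewrite Rmin_left in Hz by lra. rewrite Rmax_right in Hz by lra.
    apply Hf. lra. }
  destruct (rint_left_bound G HGc) as [B HB].
  unfold is_RInt_gen.
  apply filterlimi_lim_ext_loc with (f := fun ab => RInt G 0 (psi mu (snd ab))).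
  { apply Filter_prod with (Q := fun x => x = mu) (R := fun y => mu < y).
    - reflexivity.
    - exists mu. auto.
    - intros x y -> Hy. simpl. apply Step1; auto. }
  apply filterlim_locally. intros eps.
  set (B' := Rabs B + 1).
  assert (HB' : 0 < B') by (unfold B'; pose proof (Rabs_pos B); lra).
  apply Filter_prod with (Q := fun x => x = mu)
    (R := fun y => Rmax mu (mu * B' / eps) < y).
  - reflexivity.
  - exists (Rmax mu (mu * B' / eps)). auto.
  - intros x y _ Hy. simpl.
    assert (Hy1 : mu < y) by (eapply Rle_lt_trans; [apply Rmax_l|exact Hy]).
    assert (Hy2 : mu * B' / eps < y) by (eapply Rle_lt_trans; [apply Rmax_r|exact Hy]).
    destruct (psi_props mu y Hmu Hy1) as [Hp [_ Hp3]].
    change (Rabs (RInt G 0 (psi mu y) - RInt G 0 1) < eps).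
    rewrite Rabs_minus_sym.
    eapply Rle_lt_trans. apply HB. lra.
    assert (Hb : B <= B') by (unfold B'; pose proof (Rle_abs B); lra).
    assert (0 < eps) by apply cond_pos.
    apply Rle_lt_trans with (mu / y * B').
    { apply Rle_trans with ((1 - psi mu y) * B'). apply Rmult_le_compat_l; lra.
      apply Rmult_le_compat_r; lra. }
    apply Rmult_lt_reg_r with (y / B'). apply Rdiv_lt_0_compat; lra.
    replace (mu / y * B' * (y / B')) with mu by (field; lra).
    apply Rmult_lt_reg_l with (/ eps * B') . apply Rmult_lt_0_compat. apply Rinv_0_lt_compat; lra. lra.
    replace (/ eps * B' * (eps * (y / B'))) with y by (field; lra).
    replace (/ eps * B' * mu) with (mu * B' / eps) by (field; lra). lra.
Qed.

Lemma cont_mult (f g : R -> R) x : continuous f x -> continuous g x ->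
  continuous (fun y => f y * g y) x.
Proof. intros. apply (continuous_mult (U := R_UniformSpace) (K := R_AbsRing) f g); auto. Qed.

Lemma cont_der (f : R -> R) x : ex_derive f x -> continuous f x.
Proof. apply (ex_derive_continuous (K := R_AbsRing) (V := R_NormedModule)). Qed.

Lemma rho_cont m M : 0 < M -> continuous (rho m) M.
Proof.
  intros HM. unfold rho. apply cont_mult. apply cont_mult.
  apply continuous_const. apply continuous_sqrt_comp. apply cont_der. auto_derive. lra.
  apply continuous_Rinv; lra.
Qed.

Definition cc := / (16 * PI ^ 2).
Definition Dd (mu g v : R) := mu - g * (1 - v ^ 2).
Definition F0 mu a1 a2 g v := 2 * cc * v ^ 2 * ((a1 - g) * (a2 - g)) / Dd mu g v.
Definition F1 mu a1 a2 g v := 2 * cc * v ^ 2 * ((-(a1 - g) - (a2 - g)) / Dd mu g v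
   + (a1 - g) * (a2 - g) * (1 - v ^ 2) / Dd mu g v ^ 2).
Definition F2 mu a1 a2 g v := 4 * cc * v ^ 2 * Dd mu a1 v * Dd mu a2 v / Dd mu g v ^ 3.

Lemma cc_pos : 0 < cc.
Proof. unfold cc. apply Rinv_0_lt_compat. pose proof PI_RGT_0. nra. Qed.

Lemma Dd_pos mu g v : 0 < mu -> g < mu -> 0 <= v <= 1 -> 0 < Dd mu g v.
Proof. intros. unfold Dd. replace (v^2) with (v*v) by ring.
  assert (0 <= v*v <= 1) by nra. set (s := v*v) in *.
  assert (0 <= (mu - g) * (1 - s)) by (apply Rmult_le_pos; lra).
  assert (0 <= mu * s) by (apply Rmult_le_pos; lra).
  destruct (Rle_lt_dec 1 s).
  - assert (s = 1) by lra. subst s. nra.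
  - assert (0 < (mu - g) * (1 - s)) by (apply Rmult_lt_0_compat; lra). nra. Qed.

Lemma rho_phi m v : 0 < m -> 0 <= v < 1 -> rho m (phi (4*m^2) v) = cc * v * (1 - v^2) / (4*m^2).
Proof.
  intros Hm Hv. assert (1 - v^2 <> 0) by nra. assert (m <> 0) by lra.
  unfold rho, phi. replace (1 - 4*m^2/(4*m^2/(1-v^2))) with (v^2) by (field; auto).
  rewrite sqrt_pow2 by lra. unfold cc. field. split; auto. pose proof PI_RGT_0. lra.
Qed.

Lemma J_eq m g : 0 < m -> g < 4*m^2 ->
  J m g = RInt (fun v => 2 * cc * v ^ 2 / Dd (4*m^2) g v) 0 1.
Proof.
  intros Hm Hg. assert (Hmu : 0 < 4*m^2) by nra.
  unfold J. apply is_RInt_gen_unique. apply cov. auto.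
  - intros M HM. unfold Rdiv. apply cont_mult. apply rho_cont; lra.
    apply cont_der. auto_derive. lra.
  - intros v Hv. rewrite rho_phi by auto. assert (1 - v^2 <> 0) by nra.
    assert (Dd (4*m^2) g v > 0) by (apply Dd_pos; lra).
    unfold dphi, phi. unfold Dd in *. field. repeat split; lra.
  - intros v Hv. assert (Dd (4*m^2) g v > 0) by (apply Dd_pos; lra).
    apply cont_der. unfold Dd in *. auto_derive. lra.
Qed.

Lemma c2d_pow (f : R -> R -> R) x y n : continuity_2d_pt f x y ->
  continuity_2d_pt (fun u v => f u v ^ n) x y.
Proof.
  intros H. induction n.
  - simpl. apply continuity_2d_pt_const.
  - simpl. apply continuity_2d_pt_mult; auto.
Qed.

Ltac cont2d :=
  repeat match goal with
  | |- continuity_2d_pt (fun u v => _ + _) _ _ => apply continuity_2d_pt_plus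
  | |- continuity_2d_pt (fun u v => _ - _) _ _ => apply continuity_2d_pt_minus
  | |- continuity_2d_pt (fun u v => _ * _) _ _ => apply continuity_2d_pt_mult
  | |- continuity_2d_pt (fun u v => - _) _ _ => apply continuity_2d_pt_opp
  | |- continuity_2d_pt (fun u v => / _) _ _ => apply continuity_2d_pt_inv
  | |- continuity_2d_pt (fun u v => _ ^ _) _ _ => apply c2d_pow
  | |- continuity_2d_pt (fun u v => u) _ _ => apply continuity_2d_pt_id1
  | |- continuity_2d_pt (fun u v => v) _ _ => apply continuity_2d_pt_id2
  | |- continuity_2d_pt (fun u v => _) _ _ => apply continuity_2d_pt_const
  end.

Lemma Dd_c2d mu x t : continuity_2d_pt (fun u v => Dd mu u v) x t.
Proof. unfold Dd. cont2d. Qed.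

Lemma param_deriv mu (Fk Fk1 : R -> R -> R) x : 0 < mu -> x < mu ->
 (forall u t, Dd mu u t <> 0 -> is_derive (fun z => Fk z t) u (Fk1 u t)) ->
 (forall u t, Dd mu u t <> 0 -> continuity_2d_pt Fk1 u t) ->
 (forall u t, Dd mu u t <> 0 -> continuous (Fk u) t) ->
 is_derive (fun y => RInt (Fk y) 0 1) x (RInt (Fk1 x) 0 1).
Proof.
  intros Hmu Hx Hd Hc2 Hc.
  assert (Hloc : locally x (fun y => y < mu)) by (apply open_lt; auto).
  assert (E : RInt (Fk1 x) 0 1 = RInt (fun t => Derive (fun u => Fk u t) x) 0 1).
  { apply RInt_ext. intros t Ht. rewrite Rmin_left in Ht by lra.
    rewrite Rmax_right in Ht by lra. symmetry. apply is_derive_unique. apply Hd.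
    apply Rgt_not_eq. apply Dd_pos; lra. }
  rewrite E.
  apply (is_derive_RInt_param Fk 0 1 x).
  - apply (filter_imp (fun y => y < mu)); auto. intros y Hy t Ht.
    rewrite Rmin_left in Ht by lra. rewrite Rmax_right in Ht by lra.
    eexists. apply Hd. apply Rgt_not_eq. apply Dd_pos; lra.
  - intros t Ht. rewrite Rmin_left in Ht by lra. rewrite Rmax_right in Ht by lra.
    assert (HD : Dd mu x t <> 0) by (apply Rgt_not_eq; apply Dd_pos; lra).
    apply continuity_2d_pt_ext_loc with (f := Fk1).
    + apply locally_2d_impl with (P := fun u v => Dd mu u v <> 0).
      * apply locally_2d_forall. intros u v Huv. symmetry. apply is_derive_unique. apply Hd; auto.
      * apply continuity_2d_pt_neq_0; auto. apply Dd_c2d.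
    + apply Hc2; auto.
  - apply (filter_imp (fun y => y < mu)); auto. intros y Hy.
    apply (ex_RInt_continuous (V := R_CompleteNormedModule)).
    intros z Hz. rewrite Rmin_left in Hz by lra. rewrite Rmax_right in Hz by lra.
    apply Hc. apply Rgt_not_eq. apply Dd_pos; lra.
Qed.

Lemma dF0 mu a1 a2 u t : Dd mu u t <> 0 ->
  is_derive (fun z => F0 mu a1 a2 z t) u (F1 mu a1 a2 u t).
Proof.
  intros H. unfold F0, F1. unfold Dd in *. auto_derive. auto. field. auto.
Qed.

Lemma dF1 mu a1 a2 u t : Dd mu u t <> 0 ->
  is_derive (fun z => F1 mu a1 a2 z t) u (F2 mu a1 a2 u t).
Proof.
  intros H. unfold F1, F2. unfold Dd in *. auto_derive. repeat split; auto. field. auto.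
Qed.

Lemma c2F1 mu a1 a2 u t : Dd mu u t <> 0 -> continuity_2d_pt (F1 mu a1 a2) u t.
Proof.
  intros H. unfold F1, Rdiv. unfold Dd in *. cont2d; auto. apply pow_nonzero; auto.
Qed.

Lemma c2F2 mu a1 a2 u t : Dd mu u t <> 0 -> continuity_2d_pt (F2 mu a1 a2) u t.
Proof.
  intros H. unfold F2, Rdiv. unfold Dd in *. cont2d; auto. apply pow_nonzero; auto.
Qed.

Lemma cF0 mu a1 a2 u t : Dd mu u t <> 0 -> continuous (F0 mu a1 a2 u) t.
Proof. intros H. apply cont_der. unfold F0. unfold Dd in *. auto_derive. auto. Qed.

Lemma cF1 mu a1 a2 u t : Dd mu u t <> 0 -> continuous (F1 mu a1 a2 u) t.
Proof. intros H. apply cont_der. unfold F1. unfold Dd in *. auto_derive. repeat split; auto. Qed.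

Lemma hat_derive (C a e k x : R) : 0 < a -> 0 < e -> 0 < k -> k ^ 2 = a / e ->
  is_derive (fun v => C * (1 / (2 * a)) * (atan (k * v) / (e * k) - v / (a * v ^ 2 + e))) x
    (C * (x ^ 2 / (a * x ^ 2 + e) ^ 2)).
Proof.
  intros Ha He Hk Hka.
  assert (Ha' : a = e * k ^ 2) by (rewrite Hka; field; lra). subst a.
  assert (0 < e * k ^ 2 * x ^ 2 + e).
  { assert (0 <= e * k^2 * x^2) by (apply Rmult_le_pos; [apply Rmult_le_pos; nra| nra]). lra. }
  auto_derive. lra. unfold Rsqr. field. repeat split; try lra. nra.
Qed.

Section Main.
Variables (m a1 a2 : R).
Hypothesis hm : 0 < m.
Let mu := 4 * m ^ 2.
Lemma mu_pos : 0 < mu. Proof. unfold mu. nra. Qed.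

Lemma A_eq g : g < mu -> Afun m a1 a2 g = RInt (F0 mu a1 a2 g) 0 1.
Proof.
  intros Hg. unfold Afun. rewrite J_eq by auto.
  assert (Ex : ex_RInt (fun v => 2 * cc * v ^ 2 / Dd (4 * m ^ 2) g v) 0 1).
  { apply (ex_RInt_continuous (V := R_CompleteNormedModule)).
    intros z Hz. rewrite Rmin_left in Hz by lra. rewrite Rmax_right in Hz by lra.
    assert (0 < Dd mu g z) by (apply Dd_pos; auto; apply mu_pos).
    apply cont_der. unfold mu, Dd in *. auto_derive. lra. }
  pose proof (RInt_scal _ 0 1 ((a1 - g) * (a2 - g)) Ex) as HS.
  change (RInt (fun x => (a1 - g) * (a2 - g) * (2 * cc * x ^ 2 / Dd (4 * m ^ 2) g x)) 0 1
     = (a1 - g) * (a2 - g) * RInt (fun v => 2 * cc * v ^ 2 / Dd (4 * m ^ 2) g v) 0 1) in HS.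
  rewrite <- HS. apply RInt_ext. intros x Hx. unfold F0. fold mu.
  rewrite Rmin_left in Hx by lra. rewrite Rmax_right in Hx by lra.
  assert (0 < Dd mu g x) by (apply Dd_pos; auto; try apply mu_pos; lra).
  change ((a1 - g) * (a2 - g) * (2 * cc * x ^ 2 / Dd mu g x) = 2 * cc * x ^ 2 * ((a1 - g) * (a2 - g)) / Dd mu g x). field. lra.
Qed.

Lemma dA g : g < mu -> is_derive (Afun m a1 a2) g (RInt (F1 mu a1 a2 g) 0 1).
Proof.
  intros Hg. apply is_derive_ext_loc with (f := fun y => RInt (F0 mu a1 a2 y) 0 1).
  - apply (filter_imp (fun y => y < mu)). intros y Hy. symmetry. apply A_eq; auto.
    apply open_lt; auto.
  - apply (param_deriv mu); auto. apply mu_pos. apply dF0. apply c2F1. apply cF0.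
Qed.

Lemma DerA g : g < mu -> Derive (Afun m a1 a2) g = RInt (F1 mu a1 a2 g) 0 1.
Proof. intros. apply is_derive_unique. apply dA; auto. Qed.

Lemma d2A g : g < mu -> is_derive (Derive (Afun m a1 a2)) g (RInt (F2 mu a1 a2 g) 0 1).
Proof.
  intros Hg. apply is_derive_ext_loc with (f := fun y => RInt (F1 mu a1 a2 y) 0 1).
  - apply (filter_imp (fun y => y < mu)). intros y Hy. symmetry. apply DerA; auto.
    apply open_lt; auto.
  - apply (param_deriv mu); auto. apply mu_pos. apply dF1. apply c2F2. apply cF1.
Qed.

Hypothesis ha1 : a1 < 4 * m ^ 2.
Hypothesis ha2 : a2 < 4 * m ^ 2.

Lemma F2_pos g : g < mu -> 0 < RInt (F2 mu a1 a2 g) 0 1.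
Proof.
  intros Hg. pose proof mu_pos.
  apply RInt_gt_0. lra.
  - intros x Hx. unfold F2.
    assert (0 < Dd mu g x) by (apply Dd_pos; auto; lra).
    assert (0 < Dd mu a1 x) by (apply Dd_pos; auto; unfold mu; lra).
    assert (0 < Dd mu a2 x) by (apply Dd_pos; auto; unfold mu; lra).
    pose proof cc_pos.
    assert (0 < x ^ 2) by (apply pow_lt; lra).
    assert (0 < Dd mu g x ^ 3) by (apply pow_lt; lra).
    apply Rdiv_lt_0_compat; auto. repeat apply Rmult_lt_0_compat; lra.
  - intros x Hx. assert (0 < Dd mu g x) by (apply Dd_pos; auto; lra).
    apply cont_der. unfold F2. unfold Dd in *. auto_derive. repeat apply Rmult_integral_contrapositive_currified; lra.
Qed.

Lemma A2int g : g < mu ->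
  is_RInt_gen (fun M => rho m M * (2 * (M - a1) * (M - a2) / (M - g) ^ 3))
    (at_point (4 * m ^ 2)) (Rbar_locally p_infty) (RInt (F2 mu a1 a2 g) 0 1).
Proof.
  intros Hg. pose proof mu_pos. apply (cov (4 * m ^ 2)). auto.
  - intros M HM. unfold mu in *. apply cont_mult. apply rho_cont; lra.
    apply cont_der. auto_derive. assert (M - g > 0) by lra.
    repeat apply Rmult_integral_contrapositive_currified; lra.
  - intros v Hv. rewrite rho_phi by auto. assert (1 - v^2 <> 0) by nra.
    assert (Dd (4*m^2) g v > 0) by (apply Dd_pos; unfold mu in *; lra).
    unfold F2, dphi, phi, mu. unfold Dd in *. field. repeat split; lra.
  - intros v Hv. assert (Dd (4*m^2) g v > 0) by (apply Dd_pos; unfold mu in *; lra).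
    apply cont_der. unfold F2, mu. unfold Dd in *. auto_derive.
    repeat apply Rmult_integral_contrapositive_currified; lra.
Qed.

Lemma dA' g : g < mu -> is_derive (Afun m a1 a2) g (Derive (Afun m a1 a2) g).
Proof. intros. rewrite DerA by auto. apply dA; auto. Qed.

Lemma contA g : g < mu -> continuity_pt (Afun m a1 a2) g.
Proof. intros. apply continuity_pt_filterlim. apply cont_der. eexists. apply dA'; auto. Qed.

Lemma contDA g : g < mu -> continuity_pt (Derive (Afun m a1 a2)) g.
Proof. intros. apply continuity_pt_filterlim. apply cont_der. eexists. apply d2A; auto. Qed.

Lemma DA_incr x y : x < y -> y < mu -> Derive (Afun m a1 a2) x < Derive (Afun m a1 a2) y.
Proof.
  intros Hxy Hy.
  destruct (MVT_gen (Derive (Afun m a1 a2)) x y (fun g => RInt (F2 mu a1 a2 g) 0 1)) as [c [Hc Hd]].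
  - intros z Hz. rewrite Rmin_left in Hz by lra. rewrite Rmax_right in Hz by lra.
    apply d2A; lra.
  - intros z Hz. rewrite Rmin_left in Hz by lra. rewrite Rmax_right in Hz by lra.
    apply contDA; lra.
  - rewrite Rmin_left in Hc by lra. rewrite Rmax_right in Hc by lra.
    assert (0 < RInt (F2 mu a1 a2 c) 0 1) by (apply F2_pos; lra). nra.
Qed.

Lemma DA_le x y : x <= y -> y < mu -> Derive (Afun m a1 a2) x <= Derive (Afun m a1 a2) y.
Proof.
  intros Hxy Hy. destruct (Rle_lt_or_eq_dec _ _ Hxy) as [h|h].
  - left. apply DA_incr; auto.
  - subst. lra.
Qed.

Lemma conv_aux x y t : x <= y -> y < mu -> 0 <= t <= 1 ->
  Afun m a1 a2 (t * x + (1 - t) * y) <= t * Afun m a1 a2 x + (1 - t) * Afun m a1 a2 y.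
Proof.
  intros Hxy Hy Ht. set (z := t * x + (1 - t) * y).
  assert (Hz : x <= z <= y) by (unfold z; nra).
  destruct (MVT_gen (Afun m a1 a2) x z (Derive (Afun m a1 a2))) as [c1 [Hc1 Hd1]].
  - intros w Hw. rewrite Rmin_left in Hw by lra. rewrite Rmax_right in Hw by lra.
    apply dA'; lra.
  - intros w Hw. rewrite Rmin_left in Hw by lra. rewrite Rmax_right in Hw by lra.
    apply contA; lra.
  - destruct (MVT_gen (Afun m a1 a2) z y (Derive (Afun m a1 a2))) as [c2 [Hc2 Hd2]].
    + intros w Hw. rewrite Rmin_left in Hw by lra. rewrite Rmax_right in Hw by lra.
      apply dA'; lra.
    + intros w Hw. rewrite Rmin_left in Hw by lra. rewrite Rmax_right in Hw by lra.
      apply contA; lra.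
    + rewrite Rmin_left in Hc1, Hc2 by lra. rewrite Rmax_right in Hc1, Hc2 by lra.
      assert (Hle : Derive (Afun m a1 a2) c1 <= Derive (Afun m a1 a2) c2) by (apply DA_le; lra).
      assert (E1 : z - x = (1 - t) * (y - x)) by (unfold z; ring).
      assert (E2 : y - z = t * (y - x)) by (unfold z; ring).
      rewrite E1 in Hd1. rewrite E2 in Hd2.
      assert (0 <= t * (1 - t) * (y - x) * (Derive (Afun m a1 a2) c2 - Derive (Afun m a1 a2) c1)).
      { repeat apply Rmult_le_pos; lra. }
      nra.
Qed.

Lemma convex x y t : x < mu -> y < mu -> 0 <= t <= 1 ->
  Afun m a1 a2 (t * x + (1 - t) * y) <= t * Afun m a1 a2 x + (1 - t) * Afun m a1 a2 y.
Proof.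
  intros Hx Hy Ht. destruct (Rle_lt_dec x y).
  - apply conv_aux; auto.
  - pose proof (conv_aux y x (1 - t) ltac:(lra) Hx ltac:(lra)).
    replace (t * x + (1 - t) * y) with ((1 - t) * y + (1 - (1 - t)) * x) by ring.
    lra.
Qed.

Lemma div_le (a b x y : R) : 0 < x -> 0 < y -> a * y <= b * x -> a / x <= b / y.
Proof.
  intros Hx Hy H. unfold Rdiv.
  apply Rmult_le_reg_r with (x * y). apply Rmult_lt_0_compat; auto.
  replace (a * / x * (x * y)) with (a * y) by (field; lra).
  replace (b * / y * (x * y)) with (b * x) by (field; lra). auto.
Qed.

Definition Qf g v := -((mu - g) ^ 2 * (1 - v ^ 2) + 2 * mu * (mu - g) * v ^ 2)
   + mu * ((mu - a1) + (mu - a2)) * v ^ 2 + (mu - a1) * (mu - a2) * (1 - v ^ 2).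

Lemma F1_Q g v : Dd mu g v <> 0 -> F1 mu a1 a2 g v = 2 * cc * v ^ 2 * Qf g v / Dd mu g v ^ 2.
Proof. intros H. unfold F1, Qf. unfold Dd in *. field. auto. Qed.

Definition Kc := mu * ((mu - a1) + (mu - a2)) + (mu - a1) * (mu - a2).
Definition hmf g v := - cc * (mu - g) * (2 * v - 1) / (mu + 2 * (mu - g) * (1 - v)).

Lemma F1_upper g v : mu <= mu - g -> 2 * Kc <= (mu - g) * mu -> 0 <= v <= 1 ->
  F1 mu a1 a2 g v <= hmf g v.
Proof.
  intros He HK Hv. pose proof mu_pos. pose proof cc_pos.
  assert (Hd1 : 0 < mu - a1) by (unfold mu; lra).
  assert (Hd2 : 0 < mu - a2) by (unfold mu; lra).
  set (e := mu - g) in *. set (w := 1 - v ^ 2).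
  assert (Hw : 0 <= w <= 1) by (unfold w; nra).
  assert (HDe : Dd mu g v = mu * v ^ 2 + e * w) by (unfold Dd, e, w; ring).
  assert (HD : mu <= Dd mu g v).
  { rewrite HDe. assert (0 <= (e - mu) * w) by (apply Rmult_le_pos; lra).
    unfold w in *. nra. }
  assert (HQ : Qf g v <= - e * Dd mu g v / 2).
  { unfold Qf. fold e. fold w.
    assert (a : e * Dd mu g v <= e ^ 2 * w + 2 * mu * e * v ^ 2).
    { rewrite HDe. assert (0 <= mu * e * v^2) by (apply Rmult_le_pos; [nra| nra]). nra. }
    assert (b : mu * ((mu - a1) + (mu - a2)) * v ^ 2 + (mu - a1) * (mu - a2) * w <= Kc).
    { unfold Kc. assert (0 <= mu * ((mu - a1) + (mu - a2)) * (1 - v^2)) by (apply Rmult_le_pos; nra).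
      assert (0 <= (mu - a1) * (mu - a2) * (1 - w)) by (apply Rmult_le_pos; nra). nra. }
    assert (c : e * mu <= e * Dd mu g v) by (apply Rmult_le_compat_l; lra).
    nra. }
  assert (HDp : 0 < Dd mu g v) by lra.
  rewrite F1_Q by lra. unfold hmf. fold e.
  set (E := mu + 2 * e * (1 - v)).
  assert (HE : Dd mu g v <= E).
  { rewrite HDe. unfold E, w. assert (0 <= e * (1 - v) * (1 - v)) by (repeat apply Rmult_le_pos; lra).
    assert (0 <= mu * (1 - v^2)) by (apply Rmult_le_pos; nra). nra. }
  apply div_le. apply pow_lt; lra. lra.
  assert (Hv2 : v ^ 2 * E >= (2 * v - 1) * Dd mu g v).
  { destruct (Rle_lt_dec (2 * v - 1) 0).
    - assert (0 <= v ^ 2 * E) by (apply Rmult_le_pos; nra). nra.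
    - assert ((2 * v - 1) * Dd mu g v <= (2 * v - 1) * E) by (apply Rmult_le_compat_l; lra).
      assert ((2 * v - 1) * E <= v ^ 2 * E) by (apply Rmult_le_compat_r; nra). lra. }
  assert (S1 : 2 * cc * v ^ 2 * Qf g v * E <= 2 * cc * v ^ 2 * (- e * Dd mu g v / 2) * E).
  { apply Rmult_le_compat_r. lra. apply Rmult_le_compat_l. assert (0 <= v^2) by nra. nra. auto. }
  assert (S2 : cc * e * Dd mu g v * ((2 * v - 1) * Dd mu g v) <= cc * e * Dd mu g v * (v ^ 2 * E)).
  { apply Rmult_le_compat_l. assert (0 < cc * e) by (apply Rmult_lt_0_compat; lra). nra. lra. }
  replace (- cc * e * (2 * v - 1) * Dd mu g v ^ 2) with (- (cc * e * Dd mu g v * ((2 * v - 1) * Dd mu g v))) by ring.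
  replace (2 * cc * v ^ 2 * (- e * Dd mu g v / 2) * E) with (- (cc * e * Dd mu g v * (v ^ 2 * E))) in S1 by field.
  lra.
Qed.

Lemma int_hmf g : g < mu ->
  RInt (hmf g) 0 1 = - cc * ((1 + mu / (mu - g)) / 2 * (ln (mu + 2 * (mu - g)) - ln mu) - 1).
Proof.
  intros Hg. pose proof mu_pos. set (e := mu - g).
  assert (He : 0 < e) by (unfold e; lra).
  set (Hf := fun v => - cc * e * (-(1 + 2 * mu / (2 * e)) / (2 * e) * ln (mu + 2 * e * (1 - v)) - 2 * v / (2 * e))).
  assert (HI : is_RInt (hmf g) 0 1 (minus (Hf 1) (Hf 0))).
  { apply (is_RInt_derive (V := R_CompleteNormedModule)).
    - intros x Hx. rewrite Rmin_left in Hx by lra. rewrite Rmax_right in Hx by lra.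
      assert (0 <= e * (1 - x)) by (apply Rmult_le_pos; lra).
      unfold Hf, hmf. fold e. auto_derive. lra. field. repeat split; lra.
    - intros x Hx. rewrite Rmin_left in Hx by lra. rewrite Rmax_right in Hx by lra.
      assert (0 <= e * (1 - x)) by (apply Rmult_le_pos; lra).
      apply cont_der. unfold hmf. fold e. auto_derive. lra. }
  rewrite (is_RInt_unique _ _ _ _ HI).
  change (Hf 1 - Hf 0 = - cc * ((1 + mu / e) / 2 * (ln (mu + 2 * e) - ln mu) - 1)).
  unfold Hf. replace (mu + 2 * e * (1 - 1)) with mu by ring.
  replace (mu + 2 * e * (1 - 0)) with (mu + 2 * e) by ring. field. lra.
Qed.

Lemma lim_minfty : is_lim (Derive (Afun m a1 a2)) m_infty m_infty.
Proof.
  pose proof mu_pos. pose proof cc_pos.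
  intros P [M HP].
  set (T := 2 * (1 - M / cc)).
  set (e0 := Rmax mu (Rmax (2 * Kc / mu) (exp (T + ln mu) / 2))).
  exists (mu - e0). intros g Hg. apply HP.
  assert (He0 : mu <= e0) by apply Rmax_l.
  assert (He1 : 2 * Kc / mu <= e0) by (eapply Rle_trans; [apply Rmax_l| apply Rmax_r]).
  assert (He2 : exp (T + ln mu) / 2 <= e0) by (eapply Rle_trans; [apply Rmax_r| apply Rmax_r]).
  assert (Hgm : g < mu) by lra.
  set (e := mu - g) in *.
  assert (Hee : e0 < e) by (unfold e; lra).
  rewrite DerA by auto.
  apply Rle_lt_trans with (RInt (hmf g) 0 1).
  { apply RInt_le. lra.
    - apply (ex_RInt_continuous (V := R_CompleteNormedModule)).
      intros z Hz. rewrite Rmin_left in Hz by lra. rewrite Rmax_right in Hz by lra.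
      apply cF1. apply Rgt_not_eq. apply Dd_pos; lra.
    - apply (ex_RInt_continuous (V := R_CompleteNormedModule)).
      intros z Hz. rewrite Rmin_left in Hz by lra. rewrite Rmax_right in Hz by lra.
      assert (0 <= e * (1 - z)) by (apply Rmult_le_pos; lra).
      apply cont_der. unfold hmf. fold e. auto_derive. lra.
    - intros x Hx. apply F1_upper; try lra. fold e.
      apply Rmult_le_reg_r with (/ mu). apply Rinv_0_lt_compat; lra.
      replace (e * mu * / mu) with e by (field; lra).
      unfold Rdiv in He1. lra. }
  rewrite int_hmf by auto. fold e.
  set (L := ln (mu + 2 * e) - ln mu).
  assert (HL : T < L).
  { unfold L. assert (exp (T + ln mu) < mu + 2 * e) by lra.
    apply ln_increasing in H1. rewrite ln_exp in H1. lra. apply exp_pos. }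
  assert (HL0 : 0 <= L).
  { unfold L. assert (ln mu <= ln (mu + 2 * e)).
    { apply Rlt_le. apply ln_increasing; lra. } lra. }
  assert (0 <= mu / e * L) by (apply Rmult_le_pos; [apply Rlt_le; apply Rdiv_lt_0_compat; lra| lra]).
  assert (- cc * ((1 + mu / e) / 2 * L - 1) <= - cc * (L / 2 - 1)).
  { assert (L / 2 - 1 <= (1 + mu / e) / 2 * L - 1) by nra. nra. }
  assert (- cc * (L / 2 - 1) < M).
  { unfold T in HL. assert (M / cc * cc = M) by (field; lra). nra. }
  lra.
Qed.

Definition kap := Rmin ((mu - a1) * (mu - a2)) (mu * ((mu - a1) + (mu - a2))).

Lemma kap_pos : 0 < kap.
Proof.
  pose proof mu_pos. unfold kap. apply Rmin_glb_lt.
  apply Rmult_lt_0_compat; unfold mu in *; lra.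
  apply Rmult_lt_0_compat; unfold mu in *; lra.
Qed.

Lemma F1_lower g v : 0 < mu - g <= 1 -> (mu - g) * (1 + 2 * mu) <= kap / 2 -> 0 <= v <= 1 ->
  cc * kap * (v ^ 2 / (mu * v ^ 2 + (mu - g)) ^ 2) <= F1 mu a1 a2 g v.
Proof.
  intros He HK Hv. pose proof mu_pos. pose proof cc_pos. pose proof kap_pos.
  assert (Hd1 : 0 < mu - a1) by (unfold mu; lra).
  assert (Hd2 : 0 < mu - a2) by (unfold mu; lra).
  assert (Hk1 : kap <= (mu - a1) * (mu - a2)) by apply Rmin_l.
  assert (Hk2 : kap <= mu * ((mu - a1) + (mu - a2))) by apply Rmin_r.
  set (e := mu - g) in *. set (w := 1 - v ^ 2).
  assert (Hv2 : 0 <= v ^ 2 <= 1) by nra.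
  assert (Hw : 0 <= w <= 1) by (unfold w; nra).
  assert (HDe : Dd mu g v = mu * v ^ 2 + e * w) by (unfold Dd, e, w; ring).
  assert (HDp : 0 < Dd mu g v) by (apply Dd_pos; [lra| unfold e in *; lra | lra]).
  assert (HD : Dd mu g v <= mu * v ^ 2 + e).
  { rewrite HDe. assert (e * w <= e * 1) by (apply Rmult_le_compat_l; lra). lra. }
  assert (HQ : kap / 2 <= Qf g v).
  { unfold Qf. fold e. fold w.
    assert (a : e ^ 2 * w + 2 * mu * e * v ^ 2 <= e * (1 + 2 * mu)).
    { assert (e ^ 2 * w <= e * 1).
      { assert (e^2 * w <= e^2 * 1) by (apply Rmult_le_compat_l; nra). nra. }
      assert (2 * mu * e * v ^ 2 <= 2 * mu * e * 1) by (apply Rmult_le_compat_l; nra). nra. }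
    assert (b : kap <= mu * ((mu - a1) + (mu - a2)) * v ^ 2 + (mu - a1) * (mu - a2) * w).
    { assert (kap * v^2 <= mu * ((mu - a1) + (mu - a2)) * v ^ 2) by (apply Rmult_le_compat_r; lra).
      assert (kap * w <= (mu - a1) * (mu - a2) * w) by (apply Rmult_le_compat_r; lra).
      unfold w in *. nra. }
    lra. }
  rewrite F1_Q by lra.
  assert (HE : 0 < mu * v ^ 2 + e) by nra.
  replace (cc * kap * (v ^ 2 / (mu * v ^ 2 + e) ^ 2)) with ((cc * kap * v ^ 2) / (mu * v ^ 2 + e) ^ 2) by (field; lra).
  apply div_le. apply pow_lt; lra. apply pow_lt; lra.
  assert (S1 : Dd mu g v ^ 2 <= (mu * v ^ 2 + e) ^ 2) by (apply pow_incr; lra).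
  assert (S2 : cc * kap * v ^ 2 * Dd mu g v ^ 2 <= cc * kap * v ^ 2 * (mu * v ^ 2 + e) ^ 2).
  { apply Rmult_le_compat_l; auto. apply Rmult_le_pos; [apply Rmult_le_pos|]; lra. }
  assert (S3 : cc * kap * v ^ 2 * (mu * v ^ 2 + e) ^ 2 <= 2 * cc * v ^ 2 * Qf g v * (mu * v ^ 2 + e) ^ 2).
  { apply Rmult_le_compat_r. apply pow_le; lra.
    replace (cc * kap * v ^ 2) with ((cc * v ^ 2) * kap) by ring.
    replace (2 * cc * v ^ 2 * Qf g v) with ((cc * v ^ 2) * (2 * Qf g v)) by ring.
    apply Rmult_le_compat_l. apply Rmult_le_pos; lra. lra. }
  lra.
Qed.

Lemma lim_left : filterlim (Derive (Afun m a1 a2)) (at_left (4 * m ^ 2)) (Rbar_locally p_infty).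
Proof.
  pose proof mu_pos as Hmu. pose proof cc_pos. pose proof kap_pos.
  intros P [M HP].
  set (C := cc * kap).
  assert (HC : 0 < C) by (unfold C; apply Rmult_lt_0_compat; lra).
  set (Tt := 2 * mu * (Rabs M + 1) / C + 1 / mu).
  assert (HTt : 0 < Tt).
  { unfold Tt. assert (0 < 2 * mu * (Rabs M + 1) / C).
    { apply Rdiv_lt_0_compat; auto. pose proof (Rabs_pos M). nra. }
    assert (0 < 1 / mu) by (apply Rdiv_lt_0_compat; lra). lra. }
  set (S0 := (PI / 4) / Tt).
  assert (HS0 : 0 < S0) by (unfold S0; apply Rdiv_lt_0_compat; [pose proof PI_RGT_0; lra| lra]).
  set (e1 := Rmin (Rmin 1 (kap / 2 / (1 + 2 * mu))) (Rmin mu (S0 ^ 2 / mu))).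
  assert (He1 : 0 < e1).
  { unfold e1. repeat apply Rmin_glb_lt; try lra.
    apply Rdiv_lt_0_compat; lra. apply Rdiv_lt_0_compat; [apply pow_lt|]; lra. }
  unfold filtermap, at_left, within. exists (mkposreal e1 He1).
  intros g Hball Hg. apply HP. change (g < mu) in Hg.
  change (Rabs (g - mu) < e1) in Hball.
  rewrite Rabs_left in Hball by lra. assert (Hball2 : mu - g < e1) by lra.
  set (e := mu - g) in *.
  assert (Hep : 0 < e) by (unfold e; lra).
  assert (Hem : e < e1) by lra.
  assert (Ha : e <= 1).
  { assert (e1 <= 1) by (unfold e1; eapply Rle_trans; apply Rmin_l). lra. }
  assert (Hb : e <= kap / 2 / (1 + 2 * mu)).
  { assert (e1 <= kap / 2 / (1 + 2 * mu)) by (unfold e1; eapply Rle_trans; [apply Rmin_l|apply Rmin_r]). lra. }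
  assert (Hc : e <= mu).
  { assert (e1 <= mu) by (unfold e1; eapply Rle_trans; [apply Rmin_r|apply Rmin_l]). lra. }
  assert (Hd : e < S0 ^ 2 / mu).
  { assert (e1 <= S0 ^ 2 / mu) by (unfold e1; eapply Rle_trans; [apply Rmin_r|apply Rmin_r]). lra. }
  assert (Hgm : g < mu) by lra.
  rewrite DerA by auto.
  set (k := sqrt (mu / e)).
  assert (Hk2 : k ^ 2 = mu / e).
  { unfold k. simpl. rewrite Rmult_1_r. apply sqrt_sqrt. apply Rlt_le, Rdiv_lt_0_compat; lra. }
  assert (Hk : 1 <= k).
  { unfold k. rewrite <- sqrt_1. apply sqrt_le_1_alt.
    apply Rmult_le_reg_r with e; auto. unfold Rdiv. rewrite Rmult_assoc, Rinv_l by lra. lra. }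
  set (Hat := fun v => C * (1 / (2 * mu)) * (atan (k * v) / (e * k) - v / (mu * v ^ 2 + e))).
  assert (HI : is_RInt (fun v => C * (v ^ 2 / (mu * v ^ 2 + e) ^ 2)) 0 1 (minus (Hat 1) (Hat 0))).
  { apply (is_RInt_derive (V := R_CompleteNormedModule)).
    - intros x Hx. unfold Hat. apply hat_derive; lra.
    - intros x Hx. apply cont_der. eexists. assert (0 <= mu * (x * x)) by (apply Rmult_le_pos; nra). auto_derive. repeat apply Rmult_integral_contrapositive_currified; lra. reflexivity. }
  apply Rlt_le_trans with (minus (Hat 1) (Hat 0)).
  2:{ rewrite <- (is_RInt_unique _ _ _ _ HI). apply RInt_le. lra.
    - eexists; eauto.
    - apply (ex_RInt_continuous (V := R_CompleteNormedModule)).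
      intros z Hz. rewrite Rmin_left in Hz by lra. rewrite Rmax_right in Hz by lra.
      apply cF1. apply Rgt_not_eq. apply Dd_pos; lra.
    - intros x Hx. unfold C, e. apply F1_lower; try lra. fold e.
      split; lra. fold e.
      apply Rmult_le_reg_r with (/ (1 + 2 * mu)). apply Rinv_0_lt_compat; lra.
      replace (e * (1 + 2 * mu) * / (1 + 2 * mu)) with e by (field; lra).
      unfold Rdiv in Hb. lra. }
  change (M < Hat 1 - Hat 0). unfold Hat.
  replace (k * 0) with 0 by ring. rewrite atan_0.
  assert (Hat1 : PI / 4 <= atan (k * 1)).
  { rewrite <- atan_1. rewrite Rmult_1_r. destruct (Rle_lt_or_eq_dec _ _ Hk) as [h|h].
    - left. apply atan_increasing; auto.
    - rewrite h. lra. }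
  set (s := e * k).
  assert (Hs : 0 < s) by (unfold s; apply Rmult_lt_0_compat; lra).
  assert (Hs2 : s ^ 2 = e * mu) by (unfold s; rewrite Rpow_mult_distr, Hk2; field; lra).
  assert (HsS : s < S0).
  { assert (s ^ 2 < S0 ^ 2).
    { rewrite Hs2. apply Rmult_lt_reg_r with (/ mu). apply Rinv_0_lt_compat; lra.
      replace (e * mu * / mu) with e by (field; lra). unfold Rdiv in Hd. lra. }
    nra. }
  assert (Hq : Tt < (PI / 4) / s).
  { unfold S0 in HsS. apply Rmult_lt_reg_r with (s / Tt). apply Rdiv_lt_0_compat; lra.
    replace (Tt * (s / Tt)) with s by (field; lra).
    replace (PI / 4 / s * (s / Tt)) with (PI / 4 / Tt) by (field; lra). lra. }
  assert (Hq2 : (PI / 4) / s <= atan (k * 1) / s).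
  { unfold Rdiv. apply Rmult_le_compat_r. left; apply Rinv_0_lt_compat; lra. lra. }
  assert (Hq3 : 0 / (mu * 0 ^ 2 + e) = 0) by (field; lra).
  assert (Hq4 : 1 / (mu * 1 ^ 2 + e) <= 1 / mu).
  { unfold Rdiv. rewrite !Rmult_1_l. apply Rinv_le_contravar; lra. }
  fold s. rewrite Hq3.
  assert (HM : M < C * (1 / (2 * mu)) * (Tt - 1 / mu)).
  { unfold Tt. replace (C * (1 / (2 * mu)) * (2 * mu * (Rabs M + 1) / C + 1 / mu - 1 / mu))
      with (Rabs M + 1) by (field; lra). pose proof (Rle_abs M). lra. }
  assert (HCp : 0 < C * (1 / (2 * mu))) by (apply Rmult_lt_0_compat; [lra| apply Rdiv_lt_0_compat; lra]).
  assert (C * (1 / (2 * mu)) * (Tt - 1 / mu) <= C * (1 / (2 * mu)) * (atan (k * 1) / s - 1 / (mu * 1 ^ 2 + e))).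
  { apply Rmult_le_compat_l; lra. }
  replace (C * (1 / (2 * mu)) * (atan 0 / (e * k) - 0) ) with 0 by (rewrite atan_0; field; lra).
  lra.
Qed.

Lemma main_sec :
  (forall g, g < 4 * m ^ 2 ->
     ex_derive (Afun m a1 a2) g /\
     exists v, is_RInt_gen
                 (fun M => rho m M * (2 * (M - a1) * (M - a2) / (M - g) ^ 3))
                 (at_point (4 * m ^ 2)) (Rbar_locally p_infty) v
               /\ is_derive (Derive (Afun m a1 a2)) g v /\ 0 < v) /\
  (forall x y t, x < 4 * m ^ 2 -> y < 4 * m ^ 2 -> 0 <= t <= 1 ->
     Afun m a1 a2 (t * x + (1 - t) * y)
       <= t * Afun m a1 a2 x + (1 - t) * Afun m a1 a2 y) /\
  (forall x y, x < y -> y < 4 * m ^ 2 ->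
     Derive (Afun m a1 a2) x < Derive (Afun m a1 a2) y) /\
  is_lim (Derive (Afun m a1 a2)) m_infty m_infty /\
  filterlim (Derive (Afun m a1 a2)) (at_left (4 * m ^ 2)) (Rbar_locally p_infty) /\
  (forall y, exists g, g < 4 * m ^ 2 /\ Derive (Afun m a1 a2) g = y).
Proof.
  pose proof mu_pos as Hmu.
  split; [|split; [|split; [|split; [|split]]]].
  - intros g Hg. split. eexists. apply dA; auto.
    exists (RInt (F2 mu a1 a2 g) 0 1). split. apply A2int; auto.
    split. apply d2A; auto. apply F2_pos; auto.
  - intros x y t Hx Hy Ht. apply convex; auto.
  - intros x y Hxy Hy. apply DA_incr; auto.
  - apply lim_minfty.
  - apply lim_left.
  - intros y.
    destruct (lim_minfty (fun z => z < y) (ex_intro _ y (fun x h => h))) as [N HN].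
    set (g1 := Rmin (N - 1) (mu - 1)).
    assert (Hg1 : g1 < mu) by (unfold g1; pose proof (Rmin_r (N - 1) (mu - 1)); lra).
    assert (Hf1 : Derive (Afun m a1 a2) g1 < y).
    { apply HN. unfold g1. pose proof (Rmin_l (N - 1) (mu - 1)); lra. }
    destruct (lim_left (fun z => y < z) (ex_intro _ y (fun x h => h))) as [eps Heps].
    set (g2 := Rmax (mu - eps / 2) ((g1 + mu) / 2)).
    assert (Hepsp : 0 < eps) by apply cond_pos.
    assert (Hg2a : mu - eps / 2 <= g2) by apply Rmax_l.
    assert (Hg2b : (g1 + mu) / 2 <= g2) by apply Rmax_r.
    assert (Hg2c : g2 < mu) by (unfold g2; apply Rmax_lub_lt; lra).
    assert (Hf2 : y < Derive (Afun m a1 a2) g2).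
    { apply Heps. change (Rabs (g2 - mu) < eps). rewrite Rabs_left by lra. lra. auto. }
    destruct (Ranalysis5.IVT_interv (fun x => Derive (Afun m a1 a2) x - y) g1 g2) as [z [Hz Hz2]].
    + intros a Ha. apply continuity_pt_minus. apply contDA; lra. apply continuity_pt_const.
      intros u v; auto.
    + lra.
    + lra.
    + lra.
    + exists z. split. change (z < mu). lra. cbv beta in Hz2. lra.
Qed.
End Main.

Theorem lemma4p10 (m a1 a2 : R) (hm : 0 < m)
  (ha1 : a1 < 4 * m ^ 2) (ha2 : a2 < 4 * m ^ 2) :
  (forall g, g < 4 * m ^ 2 ->
     ex_derive (Afun m a1 a2) g /\
     exists v, is_RInt_gen
                 (fun M => rho m M * (2 * (M - a1) * (M - a2) / (M - g) ^ 3))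
                 (at_point (4 * m ^ 2)) (Rbar_locally p_infty) v
               /\ is_derive (Derive (Afun m a1 a2)) g v /\ 0 < v) /\
  (forall x y t, x < 4 * m ^ 2 -> y < 4 * m ^ 2 -> 0 <= t <= 1 ->
     Afun m a1 a2 (t * x + (1 - t) * y)
       <= t * Afun m a1 a2 x + (1 - t) * Afun m a1 a2 y) /\
  (forall x y, x < y -> y < 4 * m ^ 2 ->
     Derive (Afun m a1 a2) x < Derive (Afun m a1 a2) y) /\
  is_lim (Derive (Afun m a1 a2)) m_infty m_infty /\
  filterlim (Derive (Afun m a1 a2)) (at_left (4 * m ^ 2)) (Rbar_locally p_infty) /\
  (forall y, exists g, g < 4 * m ^ 2 /\ Derive (Afun m a1 a2) g = y).
Proof. exact (main_sec m a1 a2 hm ha1 ha2). Qed.
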